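(* Under the standing assumptions below, for every $p>p_k$ there is exactly one $\rho\in(\rho_k,\rho_{\max})$ with $\varPhi_k(p,\rho)=0$.
   Context: Standing assumptions: $\varGamma_k,h_k:(0,\infty)\to\mathbb R$ are twice continuously differentiable and satisfy (C1) $\varGamma_k'\le 0$, $(\rho\varGamma_k(\rho))'\ge 0$, $(\rho\varGamma_k(\rho))''\ge0$; (C2) $\lim_{\rho\to+\infty}\varGamma_k(\rho)=\varGamma_\infty>0$ and $\varGamma_k(\rho)\le\varGamma_\infty+2$ for all $\rho>0$; (C3) $h_k'\ge0$, $h_k''\ge0$. A reference state $\rho_k>0$, $p_k>0$ is given with $e_k:=\dfrac{p_k-h_k(\rho_k)}{\varGamma_k(\rho_k)\rho_k}\ge 0$. The Hugoniot function is $$\varPhi_k(p,\rho):=\varGamma_k(\rho_k)\rho_k\,(p-h_k(\rho))-\varGamma_k(\rho)\rho\,(p_k-h_k(\rho_k))-\tfrac12\varGamma_k(\rho_k)(p+p_k)\varGamma_k(\rho)(\rho-\rho_k).$$ $\rho_{\max}$ denotes the unique $\rho\in(\rho_k,\infty)$ with $(\rho-\rho_k)\varGamma_k(\rho)=2\rho_k$. *)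

(* Defs.v *)
From Stdlib Require Import Reals.
Open Scope R_scope.

Definition C2_pos (f f1 f2 : R -> R) : Prop :=
  forall x, 0 < x ->
    derivable_pt_lim f x (f1 x) /\
    derivable_pt_lim f1 x (f2 x) /\
    continuity_pt f2 x.

Definition lim_pinfty (f : R -> R) (l : R) : Prop :=
  forall eps, 0 < eps -> exists M, forall x, M < x -> Rabs (f x - l) < eps.

Definition Phi (Gam h : R -> R) (rk pk p rho : R) : R :=
  Gam rk * rk * (p - h rho) - Gam rho * rho * (pk - h rk)
  - / 2 * Gam rk * (p + pk) * Gam rho * (rho - rk).

(* Main.v *)
Require Import Defs.
From Stdlib Require Import Reals Lra.
From Coquelicot Require Import Coquelicot.
Open Scope R_scope.
Lemma dPhi (Gam Gam1 Gam2 h h1 h2 : R -> R) rk pk p x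
  (HG : C2_pos Gam Gam1 Gam2) (Hh : C2_pos h h1 h2) (Hx : 0 < x) :
  derivable_pt_lim (fun r => Phi Gam h rk pk p r) x
   (- (Gam rk * rk) * h1 x - (pk - h rk) * (Gam1 x * x + Gam x)
    - / 2 * Gam rk * (p + pk) * (Gam1 x * (x - rk) + Gam x)).
Proof.
  destruct (HG x Hx) as [dG _]. destruct (Hh x Hx) as [dh _].
  apply is_derive_Reals in dG. apply is_derive_Reals in dh.
  apply is_derive_Reals. unfold Phi.
  auto_derive.
  - repeat split; eexists; eassumption.
  - replace (Derive (fun x0 : R => Gam x0) x) with (Gam1 x) by (symmetry; apply is_derive_unique; exact dG). replace (Derive (fun x0 : R => h x0) x) with (h1 x) by (symmetry; apply is_derive_unique; exact dh). ring.
Qed.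

Lemma mono_up (f f' : R -> R) a b :
  0 < a -> a <= b -> (forall x, 0 < x -> derivable_pt_lim f x (f' x)) ->
  (forall x, 0 < x -> f' x >= 0) -> f a <= f b.
Proof.
  intros Ha Hab Hd Hp. destruct (Rle_lt_or_eq_dec _ _ Hab) as [Hlt|<-]; [|lra].
  destruct (MVT_cor2 f f' a b Hlt) as [c [Hc Hc2]].
  - intros c Hc. apply Hd. lra.
  - assert (f' c >= 0) by (apply Hp; lra).
    assert (0 <= f' c * (b - a)) by (apply Rmult_le_pos; lra). lra.
Qed.

Lemma strict_down (f f' : R -> R) a b :
  0 < a -> a < b -> (forall x, 0 < x -> derivable_pt_lim f x (f' x)) ->
  (forall x, 0 < x -> f' x < 0) -> f b < f a.
Proof.
  intros Ha Hab Hd Hp.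
  destruct (MVT_cor2 f f' a b Hab) as [c [Hc Hc2]].
  - intros c Hc. apply Hd. lra.
  - assert (f' c < 0) by (apply Hp; lra).
    assert (f' c * (b - a) < 0) by (apply Rmult_neg_pos; lra). lra.
Qed.

Theorem mainTheorem4
  (Gam Gam1 Gam2 h h1 h2 : R -> R) (Ginf rk pk rmax : R)
  (HG : C2_pos Gam Gam1 Gam2)
  (Hh : C2_pos h h1 h2)
  (C1a : forall r, 0 < r -> Gam1 r <= 0)
  (C1b : forall r, 0 < r -> Gam r + r * Gam1 r >= 0)
  (C1c : forall r, 0 < r -> 2 * Gam1 r + r * Gam2 r >= 0)
  (C2a : lim_pinfty Gam Ginf)
  (C2b : 0 < Ginf)
  (C2c : forall r, 0 < r -> Gam r <= Ginf + 2)
  (C3a : forall r, 0 < r -> h1 r >= 0)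
  (C3b : forall r, 0 < r -> h2 r >= 0)
  (Hrk : 0 < rk) (Hpk : 0 < pk)
  (Hek : (pk - h rk) / (Gam rk * rk) >= 0)
  (Hrmax1 : rk < rmax)
  (Hrmax2 : (rmax - rk) * Gam rmax = 2 * rk) :
  forall p, pk < p ->
    exists! rho, (rk < rho < rmax) /\ Phi Gam h rk pk p rho = 0.
Proof.
  intros p Hp.
  assert (dG : forall x, 0 < x -> derivable_pt_lim Gam x (Gam1 x)) by (intros x Hx; apply (HG x Hx)).
  assert (dh : forall x, 0 < x -> derivable_pt_lim h x (h1 x)) by (intros x Hx; apply (Hh x Hx)).
  assert (Gge : forall r, 0 < r -> Ginf <= Gam r).
  { intros r Hr. destruct (Rle_or_lt Ginf (Gam r)) as [H|H]; [exact H|].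
    destruct (C2a (Ginf - Gam r)) as [M HM]; [lra|].
    set (x := Rmax (M + 1) (r + 1)).
    assert (Hx1 : M < x) by (unfold x; generalize (Rmax_l (M+1) (r+1)); lra).
    assert (Hx2 : r < x) by (unfold x; generalize (Rmax_r (M+1) (r+1)); lra).
    specialize (HM x Hx1).
    assert (Gam x <= Gam r).
    { assert (- Gam r <= - Gam x); [|lra].
      apply (mono_up (fun y => - Gam y) (fun y => - Gam1 y)); try lra.
      - intros y Hy. apply derivable_pt_lim_opp. auto.
      - intros y Hy. generalize (C1a y Hy). lra. }
    apply Rabs_def2 in HM. lra. }
  assert (GkP : 0 < Gam rk) by (generalize (Gge rk Hrk); lra).
  assert (AP : 0 < Gam rk * rk) by (apply Rmult_lt_0_compat; lra).
  assert (EP : 0 <= pk - h rk).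
  { unfold Rdiv in Hek.
    replace (pk - h rk) with ((pk - h rk) * / (Gam rk * rk) * (Gam rk * rk))
      by (field; lra).
    apply Rmult_le_pos; [lra|lra]. }
  set (F := fun r => Phi Gam h rk pk p r).
  set (F' := fun x => - (Gam rk * rk) * h1 x - (pk - h rk) * (Gam1 x * x + Gam x)
    - / 2 * Gam rk * (p + pk) * (Gam1 x * (x - rk) + Gam x)).
  assert (dF : forall x, 0 < x -> derivable_pt_lim F x (F' x))
    by (intros x Hx; apply (dPhi Gam Gam1 Gam2 h h1 h2); auto).
  assert (F'neg : forall x, 0 < x -> F' x < 0).
  { intros x Hx. unfold F'.
    assert (0 <= Gam rk * rk * h1 x) by (apply Rmult_le_pos; [lra| generalize (C3a x Hx); lra]).
    assert (0 <= (pk - h rk) * (Gam1 x * x + Gam x))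
      by (apply Rmult_le_pos; [lra| generalize (C1b x Hx); lra]).
    assert (0 < Gam1 x * (x - rk) + Gam x).
    { generalize (C1b x Hx) (C1a x Hx) (Gge x Hx); intros.
      assert (Gam1 x * (x - rk) + Gam x = (Gam x + x * Gam1 x) + rk * (- Gam1 x)) by ring.
      assert (0 <= rk * (- Gam1 x)) by (apply Rmult_le_pos; lra).
      destruct (Req_dec (Gam1 x) 0) as [E0|E0].
      - rewrite E0 in *. lra.
      - assert (0 < rk * - Gam1 x) by (apply Rmult_lt_0_compat; lra). lra. }
    assert (0 < / 2 * Gam rk * (p + pk) * (Gam1 x * (x - rk) + Gam x)).
    { apply Rmult_lt_0_compat; [|lra]. apply Rmult_lt_0_compat; [|lra].
      apply Rmult_lt_0_compat; lra. }
    lra. }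
  assert (Fk : 0 < F rk).
  { unfold F, Phi. replace (rk - rk) with 0 by ring.
    replace (Gam rk * rk * (p - h rk) - Gam rk * rk * (pk - h rk) -
      / 2 * Gam rk * (p + pk) * Gam rk * 0) with (Gam rk * rk * (p - pk)) by ring.
    apply Rmult_lt_0_compat; lra. }
  assert (Fm : F rmax < 0).
  { unfold F, Phi.
    assert (Hm : 0 < rmax) by lra.
    assert (hle : h rk <= h rmax) by (apply (mono_up h h1); auto; lra).
    assert (gle : Gam rk * rk <= Gam rmax * rmax).
    { apply (mono_up (fun y => Gam y * y) (fun y => Gam1 y * y + Gam y)); auto; try lra.
      - intros y Hy. replace (Gam1 y * y + Gam y) with (Gam1 y * y + Gam y * 1) by ring.
        apply derivable_pt_lim_mult; auto. apply derivable_pt_lim_id.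
      - intros y Hy. generalize (C1b y Hy). lra. }
    replace (/ 2 * Gam rk * (p + pk) * Gam rmax * (rmax - rk))
      with (/ 2 * Gam rk * (p + pk) * ((rmax - rk) * Gam rmax)) by ring.
    rewrite Hrmax2.
    assert (Gam rk * rk * (pk - h rk) <= Gam rmax * rmax * (pk - h rk))
      by (apply Rmult_le_compat_r; lra).
    assert (0 <= Gam rk * rk * (h rmax - h rk)) by (apply Rmult_le_pos; lra).
    assert (0 < Gam rk * rk * pk) by (apply Rmult_lt_0_compat; lra).
    nra. }
  assert (Huniq : forall a b, rk < a < rmax -> rk < b < rmax -> F a = 0 -> F b = 0 -> a = b).
  { intros a b Ha Hb Fa Fb. destruct (Rtotal_order a b) as [H|[H|H]]; auto.
    - assert (F b < F a) by (apply (strict_down F F'); auto; lra). lra.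
    - assert (F a < F b) by (apply (strict_down F F'); auto; lra). lra. }
  destruct (Ranalysis5.IVT_interv (fun r => - F r) rk rmax) as [z [Hz Fz]]; auto.
  - intros a Ha. apply continuity_pt_opp. apply derivable_continuous_pt.
    exists (F' a). apply dF. lra.
  - lra.
  - lra.
  - assert (Fz0 : F z = 0) by lra.
    assert (z <> rk) by (intro; subst; lra).
    assert (z <> rmax) by (intro; subst; lra).
    exists z. split.
    + split; [lra|exact Fz0].
    + intros y [Hy Fy]. apply Huniq; auto; lra.
Qed.
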